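(* Let $d\ge 3$. An $\mathcal L_d$-structure $\mathcal M$ with domain $\mathbb M$ is a model of $\mathrm{PQM}_d$ if and only if there exists a strong $\mathcal L_d$-morphism $\kappa:\mathbb M\to\mathbb H_d$ from $\mathcal M$ to $\mathcal H_d$ such that $\kappa(\mathbb M)\ne\{\bot\}$.
   Context: Notation. For $d\ge 1$, $\mathbb H_d$ is the set of complex linear subspaces of $\mathbb C^d$, ordered by inclusion $\le$, with $\top=\mathbb C^d$, $\bot=\{0\}$, $p^\bot$ the orthogonal complement, $p\wedge q=p\cap q$ and $p\vee q=p+q$. $\mathbb U_d$ is the set of unitary operators on $\mathbb C^d$, and for $U\in\mathbb U_d$, $p\in\mathbb H_d$, $U(p)=\{Uv: v\in p\}$. The Sasaki projection is $p\,\&\,q := q\cap(q^\bot+p)$. Subspaces $p,q$ are compatible iff $p=(p\wedge q)\vee(p\wedge q^\bot)$. Language $\mathcal L_d$: a first-order language without equality and without constants, having a unary function symbol $u_U$ for each $U\in\mathbb U_d$, a unary function symbol $\pi_q$ for each $q\in\mathbb H_d$, and a unary relation symbol $[\,\cdot:p]$ for each $p\in\mathbb H_d$. Theory $\mathrm{PQM}_d$ (over $\mathcal L_d$) has the following axioms, for all $p,q\in\mathbb H_d$ and $U\in\mathbb U_d$: ($\neg\bot$) $\exists x\,\neg[x:\bot]$; ($\top$) $\forall x\,[x:\top]$; ($\le$) if $p\le q$: $\forall x\,([x:p]\to[x:q])$; ($\wedge$) if $p,q$ are compatible: $\forall x\,([x:p]\wedge[x:q]\to[x:p\wedge q])$;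 ($\pi_i$) $\forall x\,([x:p]\to[\pi_q(x):p\,\&\,q])$; ($\pi_c$) if $p\le q$: $\forall x\,([\pi_p(\pi_q(x)):\bot]\to[\pi_p(x):\bot])$; ($\pi_\bot$) $\forall x\,([\pi_q(x):\bot]\to[x:q^\bot])$; ($u_i$) $\forall x\,([x:p]\to[u_U(x):U(p)])$; ($u_e$) $\forall x\,([u_U(x):p]\to[x:U^{-1}(p)])$. Hilbert model $\mathcal H_d$: the $\mathcal L_d$-structure with domain $\mathbb H_d$, $u_U^{\mathcal H_d}(x)=U(x)$, $\pi_q^{\mathcal H_d}(x)=x\,\&\,q$, and $[x:p]^{\mathcal H_d}$ holds iff $x\le p$. Strong $\mathcal L_d$-morphism: a map $\kappa:\mathbb M\to\mathbb H_d$ such that for all $m\in\mathbb M$: $[m:p]^{\mathcal M}\iff\kappa(m)\le p$ for every $p\in\mathbb H_d$; $\kappa(\pi_q^{\mathcal M}(m))=\kappa(m)\,\&\,q$ for every $q\in\mathbb H_d$; and $\kappa(u_U^{\mathcal M}(m))=U(\kappa(m))$ for every $U\in\mathbb U_d$. *)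

(* Defs.v *)
From HB Require Import structures.
From mathcomp Require Import all_boot all_order all_algebra.
From mathcomp Require Import complex.
From mathcomp Require Import reals Rstruct.
Set Implicit Arguments. Unset Strict Implicit. Unset Printing Implicit Defensive.
Import Order.TTheory GRing.Theory Num.Theory.
Local Open Scope ring_scope.

Definition C : numClosedFieldType := (Rdefinitions.R)[i].

(* Conjugate transpose (vectors of C^d are row vectors 'rV[C]_d;
   the Hermitian inner product is <u,v> = u *m (v^* )^T). *)
Definition adjmx (m n : nat) (A : 'M[C]_(m, n)) : 'M[C]_(n, m) :=
  (map_mx Num.conj A)^T.

(* H_d: complex linear subspaces of C^d, represented by the canonical
   square matrix generating them (row space), i.e. A with <<A>> = A. *)
Definition subsp (d : nat) := {A : 'M[C]_d | genmx A == A}.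

Lemma genmx_canon (d : nat) (A : 'M[C]_d) : genmx (genmx A) == genmx A.
Proof. by rewrite genmx_id. Qed.

Definition span (d : nat) (A : 'M[C]_d) : subsp d :=
  exist _ (genmx A) (genmx_canon A).

Definition sle (d : nat) (p q : subsp d) : Prop := (val p <= val q)%MS.
Definition sbot (d : nat) : subsp d := span 0.
Definition stop (d : nat) : subsp d := span 1%:M.
Definition smeet (d : nat) (p q : subsp d) : subsp d := span (val p :&: val q)%MS.
Definition sjoin (d : nat) (p q : subsp d) : subsp d := span (val p + val q)%MS.
Definition sorth (d : nat) (p : subsp d) : subsp d := span (kermx (adjmx (val p))).

Definition sasaki (d : nat) (p q : subsp d) : subsp d :=
  smeet q (sjoin (sorth q) p).

Definition compatible (d : nat) (p q : subsp d) : Prop :=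
  p = sjoin (smeet p q) (smeet p (sorth q)).

Definition unitary (d : nat) := {U : 'M[C]_d | U *m adjmx U == 1%:M}.

(* U(p) = { U v : v in p }; U acts on column vectors v, so on the row
   vector v^T it acts as v^T |-> v^T *m U^T. *)
Definition uimg (d : nat) (U : unitary d) (p : subsp d) : subsp d :=
  span (val p *m (val U)^T).

Definition uinvimg (d : nat) (U : unitary d) (p : subsp d) : subsp d :=
  span (val p *m (invmx (val U))^T).

Local Close Scope ring_scope.

(* An L_d-structure: a nonempty domain with interpretations of the
   function symbols u_U (U in U_d), pi_q (q in H_d) and of the relation
   symbols [ . : p ] (p in H_d).  rel M p x  means  [x : p]. *)
Record Lstruct (d : nat) := LStruct {
  dom :> Type;
  dom_inhabited : inhabited dom;
  u_sym : unitary d -> dom -> dom;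
  pi_sym : subsp d -> dom -> dom;
  rel : subsp d -> dom -> Prop }.
Arguments u_sym {d} M U x : rename.
Arguments pi_sym {d} M q x : rename.
Arguments rel {d} M p x : rename.

Definition PQM_model (d : nat) (M : Lstruct d) : Prop :=
  (exists x : M, ~ rel M (sbot d) x) /\
  (forall x : M, rel M (stop d) x) /\
  (forall p q, sle p q -> forall x : M, rel M p x -> rel M q x) /\
  (forall p q, compatible p q ->
                     forall x : M, rel M p x /\ rel M q x -> rel M (smeet p q) x) /\
  (forall p q (x : M), rel M p x -> rel M (sasaki p q) (pi_sym M q x)) /\
  (forall p q, sle p q -> forall x : M,
                     rel M (sbot d) (pi_sym M p (pi_sym M q x)) ->
                     rel M (sbot d) (pi_sym M p x)) /\
  (forall q (x : M), rel M (sbot d) (pi_sym M q x) -> rel M (sorth q) x) /\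
  (forall p U (x : M), rel M p x -> rel M (uimg U p) (u_sym M U x)) /\
  (forall p U (x : M), rel M p (u_sym M U x) -> rel M (uinvimg U p) x).

Definition strong_morphism (d : nat) (M : Lstruct d) (kappa : M -> subsp d) : Prop :=
  forall m : M,
    (forall p, rel M p m <-> sle (kappa m) p) /\
    (forall q, kappa (pi_sym M q m) = sasaki (kappa m) q) /\
    (forall U, kappa (u_sym M U m) = uimg U (kappa m)).

(* Main.v *)
From HB Require Import structures.
From mathcomp Require Import all_boot all_order all_algebra.
From mathcomp Require Import complex reals Rstruct.
From mathcomp Require Import ring lra zify.
Require Import Defs.
From Stdlib Require Import Classical ClassicalEpsilon.
Set Implicit Arguments. Unset Strict Implicit. Unset Printing Implicit Defensive.
Import Order.TTheory GRing.Theory Num.Theory.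
Local Open Scope ring_scope.


Lemma adjmxM (m n p : nat) (A : 'M[C]_(m, n)) (B : 'M[C]_(n, p)) :
  adjmx (A *m B) = adjmx B *m adjmx A.
Proof. by rewrite /adjmx map_mxM trmx_mul. Qed.

Lemma adjmxK (m n : nat) (A : 'M[C]_(m, n)) : adjmx (adjmx A) = A.
Proof.
apply/matrixP=> i j; rewrite /adjmx !mxE; exact: conjCK.
Qed.

Lemma adjmxD (m n : nat) (A B : 'M[C]_(m, n)) : adjmx (A + B) = adjmx A + adjmx B.
Proof. by apply/matrixP=> i j; rewrite /adjmx !mxE rmorphD. Qed.

Lemma adjmxN (m n : nat) (A : 'M[C]_(m, n)) : adjmx (- A) = - adjmx A.
Proof. by apply/matrixP=> i j; rewrite /adjmx !mxE rmorphN. Qed.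

Lemma adjmxZ (m n : nat) (a : C) (A : 'M[C]_(m, n)) :
  adjmx (a *: A) = a^* *: adjmx A.
Proof. by apply/matrixP=> i j; rewrite /adjmx !mxE rmorphM. Qed.

Lemma adjmx0 (m n : nat) : adjmx (0 : 'M[C]_(m, n)) = 0.
Proof. by apply/matrixP=> i j; rewrite /adjmx !mxE rmorph0. Qed.

Lemma rank_adjmx (m n : nat) (A : 'M[C]_(m, n)) : \rank (adjmx A) = \rank A.
Proof. by rewrite /adjmx mxrank_tr mxrank_map. Qed.

Lemma mul_adj_eq0 (m n : nat) (A : 'M[C]_(m, n)) : A *m adjmx A = 0 -> A = 0.
Proof.
move=> h; apply/matrixP=> i j; rewrite mxE.
have := congr1 (fun M : 'M[C]_m => M i i) h; rewrite !mxE => hs.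
have := @psumr_eq0P C _ xpredT (fun k => A i k * (A i k)^*) _ _ j isT.
rewrite /=; move=> H; apply/eqP; rewrite -normr_eq0 -sqrf_eq0 normCK.
apply/eqP; apply: H.
  by move=> k _; exact: mul_conjC_ge0.
rewrite -[X in _ = X]hs; apply: eq_bigr => k _; rewrite !mxE.
reflexivity.
Qed.


Notation Km B := (kermx (adjmx B)).

Lemma orth_sym (d m n : nat) (A : 'M[C]_(m, d)) (B : 'M[C]_(n, d)) :
  A *m adjmx B = 0 -> B *m adjmx A = 0.
Proof. by move=> h; rewrite -(adjmxK B) -adjmxM h adjmx0. Qed.

Lemma orth_sub (d m n m' n' : nat) (A : 'M[C]_(m, d)) (B : 'M[C]_(n, d))
  (A' : 'M[C]_(m', d)) (B' : 'M[C]_(n', d)) :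
  (A <= A')%MS -> (B <= B')%MS -> A' *m adjmx B' = 0 -> A *m adjmx B = 0.
Proof.
move=> /submxP[X ->] /submxP[Y ->] h.
by rewrite adjmxM mulmxA -(mulmxA X) h mulmx0 mul0mx.
Qed.

Lemma orth_self (d m n : nat) (A : 'M[C]_(m, d)) (B : 'M[C]_(n, d)) :
  (A <= B)%MS -> A *m adjmx B = 0 -> A = 0.
Proof. by move=> sAB h; apply: mul_adj_eq0; apply: (orth_sub (submx_refl A) sAB h). Qed.

Lemma adjmx_col (d m n : nat) (A : 'M[C]_(m, d)) (B : 'M[C]_(n, d)) :
  adjmx (col_mx A B) = row_mx (adjmx A) (adjmx B).
Proof. by rewrite /adjmx map_col_mx tr_col_mx. Qed.

Lemma orth_adds (d m n p : nat) (A : 'M[C]_(m, d)) (B : 'M[C]_(n, d)) (D : 'M[C]_(p, d)) :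
  A *m adjmx B = 0 -> A *m adjmx D = 0 -> A *m adjmx (B + D)%MS = 0.
Proof.
move=> h1 h2; apply: (@orth_sub _ _ _ _ _ A _ A (col_mx B D) (submx_refl A)).
  by rewrite addsmxE.
by rewrite adjmx_col mul_mx_row h1 h2 row_mx0.
Qed.

Lemma sub_Km (d m n : nat) (A : 'M[C]_(m, d)) (B : 'M[C]_(n, d)) :
  (A <= Km B)%MS = (A *m adjmx B == 0).
Proof. exact: sub_kermx. Qed.

Lemma Km_orth (d n : nat) (B : 'M[C]_(n, d)) : Km B *m adjmx B = 0.
Proof. exact: mulmx_ker. Qed.

Lemma rank_Km (d n : nat) (B : 'M[C]_(n, d)) : \rank (Km B) = (d - \rank B)%N.
Proof. by rewrite mxrank_ker rank_adjmx. Qed.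

Lemma cap_Km0 (d n : nat) (B : 'M[C]_(n, d)) : (B :&: Km B)%MS = 0.
Proof.
apply: (@orth_self _ _ _ _ B); first exact: capmxSl.
by apply/eqP; rewrite -sub_Km capmxSr.
Qed.

Lemma adds_Km_full (d n : nat) (B : 'M[C]_(n, d)) : (1%:M <= B + Km B)%MS.
Proof.
rewrite sub1mx /row_full; apply/eqP.
have := mxrank_sum_cap B (Km B); rewrite cap_Km0 mxrank0 addn0 rank_Km.
by rewrite subnKC ?rank_leq_col.
Qed.

Lemma decomp (d m n : nat) (B : 'M[C]_(n, d)) (X : 'M[C]_(m, d)) :
  exists a b, X = a *m B + b *m Km B.
Proof.
have : (X <= B + Km B)%MS by apply: submx_trans (submx1 X) (adds_Km_full B).
by case/sub_addsmxP=> [[a b] /= ->]; exists a, b.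
Qed.

Lemma sub_rank_eq (d m n : nat) (A : 'M[C]_(m, d)) (B : 'M[C]_(n, d)) :
  (A <= B)%MS -> (\rank B <= \rank A)%N -> (B <= A)%MS.
Proof.
move=> sAB r; have := mxrank_leqif_sup sAB => /leqifP.
by case: ifP => // _; rewrite ltnNge r.
Qed.

Lemma KmK (d n : nat) (B : 'M[C]_(n, d)) : (Km (Km B) :=: B)%MS.
Proof.
have sB : (B <= Km (Km B))%MS by rewrite sub_Km; apply/eqP/orth_sym/Km_orth.
apply/eqmxP; rewrite sB andbT; apply: sub_rank_eq sB _.
by rewrite !rank_Km subKn ?rank_leq_col.
Qed.

Lemma Km_eqmx (d m n : nat) (A : 'M[C]_(m, d)) (B : 'M[C]_(n, d)) :
  (A :=: B)%MS -> (Km A :=: Km B)%MS.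
Proof.
move=> eAB; apply/eqmxP/andP; split; rewrite sub_Km; apply/eqP.
  by apply: (orth_sub (submx_refl _) _ (Km_orth A)); rewrite eAB.
by apply: (orth_sub (submx_refl _) _ (Km_orth B)); rewrite eAB.
Qed.

Lemma Km_anti (d m n : nat) (A : 'M[C]_(m, d)) (B : 'M[C]_(n, d)) :
  (A <= B)%MS -> (Km B <= Km A)%MS.
Proof. by move=> sAB; rewrite sub_Km; apply/eqP/(orth_sub (submx_refl _) sAB (Km_orth B)). Qed.


Lemma subN (d m n : nat) (A : 'M[C]_(m, d)) (B : 'M[C]_(n, d)) :
  (- A <= B)%MS = (A <= B)%MS.
Proof. by rewrite eqmx_opp. Qed.

Lemma sas0 (d m n : nat) (K : 'M[C]_(m, d)) (Q : 'M[C]_(n, d)) :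
  (Q :&: (Km Q + K) <= (0 : 'M_d))%MS <-> (K <= Km Q)%MS.
Proof.
split.
  move=> h; have [a [b eK]] := decomp Q K.
  have : (a *m Q <= Q :&: (Km Q + K))%MS.
    rewrite sub_capmx mulmx_sub ?submx_refl //=.
    have -> : a *m Q = K - b *m Km Q by rewrite eK addrK.
    rewrite addmx_sub ?addsmxSr //; apply: submx_trans (addsmxSl _ _).
    by rewrite subN mulmx_sub ?submx_refl.
  move/submx_trans/(_ h); rewrite submx0 => /eqP aQ0.
  by rewrite eK aQ0 add0r mulmx_sub ?submx_refl.
move=> sK; apply/rV_subP => v; rewrite sub_capmx => /andP[vQ vKK].
have vK : (v <= Km Q)%MS.
  by apply: submx_trans vKK _; rewrite addsmx_sub submx_refl.
by rewrite submx0 (orth_self vQ) //; apply/eqP; rewrite -sub_Km.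
Qed.

Lemma sas_pic (d m n p : nat) (K : 'M[C]_(m, d)) (Q : 'M[C]_(n, d)) (P : 'M[C]_(p, d)) :
  (P <= Q)%MS -> (Q :&: (Km Q + K) <= Km P)%MS -> (K <= Km P)%MS.
Proof.
move=> sPQ h; have [a [b eK]] := decomp Q K.
have : (a *m Q <= Q :&: (Km Q + K))%MS.
  rewrite sub_capmx mulmx_sub ?submx_refl //=.
  have -> : a *m Q = K - b *m Km Q by rewrite eK addrK.
  rewrite addmx_sub ?addsmxSr //; apply: submx_trans (addsmxSl _ _).
  by rewrite subN mulmx_sub ?submx_refl.
move/submx_trans/(_ h) => aQ.
rewrite eK addmx_sub // mulmx_sub //; exact: Km_anti.
Qed.

Lemma sas_mod (d m n : nat) (B : 'M[C]_(m, d)) (Q : 'M[C]_(n, d)) :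
  (B <= Q)%MS -> (Q :&: (Km Q + B) <= B)%MS.
Proof.
move=> sBQ; apply/rV_subP => v; rewrite sub_capmx => /andP[vQ].
case/sub_addsmxP=> [[a b] /= ev].
have h : (a *m Km Q <= Q :&: Km Q)%MS.
  rewrite sub_capmx [X in _ && X]mulmx_sub ?submx_refl // andbT.
  have -> : a *m Km Q = v - b *m B by rewrite ev addrK.
  by rewrite addmx_sub // subN mulmx_sub.
move: h; rewrite cap_Km0 submx0 => /eqP h.
by rewrite ev h add0r mulmx_sub ?submx_refl.
Qed.

Lemma sas_rank (d m n : nat) (K : 'M[C]_(m, d)) (Q : 'M[C]_(n, d)) :
  (\rank (Q :&: (Km Q + K)) <= \rank K)%N.
Proof.
have e1 := mxrank_sum_cap Q (Km Q + K)%MS.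
have full : \rank (Q + (Km Q + K))%MS = d.
  apply/eqP; rewrite eqn_leq rank_leq_col /=.
  have := mxrankS (adds_Km_full Q); rewrite mxrank1 => h; apply: leq_trans h _.
  by apply: mxrankS; rewrite addsmxS ?submx_refl ?addsmxSl.
have e2 : (\rank (Km Q + K)%MS <= \rank (Km Q) + \rank K)%N by apply: mxrank_adds_leqif.
rewrite rank_Km in e2.
have hq : (\rank Q <= d)%N by apply: rank_leq_col.
lia.
Qed.

Lemma split_sub (d m n : nat) (S : 'M[C]_(m, d)) (Q : 'M[C]_(n, d)) :
  (S <= Q)%MS -> (Q <= S + (Q :&: Km S))%MS.
Proof.
move=> sSQ; apply/rV_subP => v vQ; have [a [b ev]] := decomp S v.
rewrite ev; apply: addmx_sub_adds; first exact: mulmx_sub (submx_refl _).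
rewrite sub_capmx [X in _ && X]mulmx_sub ?submx_refl // andbT.
have -> : b *m Km S = v - a *m S by rewrite ev addrAC subrr add0r.
by rewrite addmx_sub // subN mulmx_sub.
Qed.


Definition spanr (d m : nat) (A : 'M[C]_(m, d)) : subsp d :=
  exist _ (genmx A) (introT eqP (genmx_id A)).

Lemma val_spanr (d m : nat) (A : 'M[C]_(m, d)) : (val (spanr A) :=: A)%MS.
Proof. exact: genmxE. Qed.

Lemma val_span (d : nat) (A : 'M[C]_d) : (val (span A) :=: A)%MS.
Proof. exact: genmxE. Qed.

Lemma subsp_ext (d : nat) (p q : subsp d) : (val p :=: val q)%MS -> p = q.
Proof.
move=> e; apply: val_inj; rewrite -(eqP (valP p)) -(eqP (valP q)).
by apply/genmxP; apply/eqmxP.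
Qed.

Lemma val_sorth (d : nat) (p : subsp d) : (val (sorth p) :=: Km (val p))%MS.
Proof. exact: genmxE. Qed.

Lemma val_smeet (d : nat) (p q : subsp d) : (val (smeet p q) :=: val p :&: val q)%MS.
Proof. exact: genmxE. Qed.

Lemma val_sjoin (d : nat) (p q : subsp d) : (val (sjoin p q) :=: val p + val q)%MS.
Proof. exact: genmxE. Qed.

Lemma val_sasaki (d : nat) (p q : subsp d) :
  (val (sasaki p q) :=: val q :&: (Km (val q) + val p))%MS.
Proof.
apply: eqmx_trans (val_smeet _ _) _; apply: cap_eqmx => //.
apply: eqmx_trans (val_sjoin _ _) _; apply: adds_eqmx => //; exact: val_sorth.
Qed.

Lemma val_sbot (d : nat) : val (sbot d) = 0.
Proof. exact: genmx0. Qed.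

Lemma val_stop (d : nat) : (val (stop d) :=: 1%:M)%MS.
Proof. exact: genmxE. Qed.

Lemma sle_bot (d : nat) (p : subsp d) : sle p (sbot d) <-> p = sbot d.
Proof.
rewrite /sle val_sbot submx0; split.
  by move/eqP=> h; apply: val_inj; rewrite h val_sbot.
by move=> ->; rewrite val_sbot.
Qed.

Lemma sle_trans (d : nat) (p q r : subsp d) : sle p q -> sle q r -> sle p r.
Proof. exact: submx_trans. Qed.

Lemma sle_antisym (d : nat) (p q : subsp d) : sle p q -> sle q p -> p = q.
Proof. by move=> h1 h2; apply: subsp_ext; apply/eqmxP; rewrite /sle in h1 h2; rewrite h1 h2. Qed.

Lemma compat_lemma (d a b c : nat) (p q : subsp d)
  (A : 'M[C]_(a, d)) (B : 'M[C]_(b, d)) (D : 'M[C]_(c, d)) :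
  A *m adjmx B = 0 -> A *m adjmx D = 0 -> B *m adjmx D = 0 ->
  (val p :=: A + B)%MS -> (val q :=: A + D)%MS ->
  compatible p q /\ (val (smeet p q) :=: A)%MS.
Proof.
move=> oAB oAD oBD ep eq.
have oB : B *m adjmx (A + D)%MS = 0 by apply: orth_adds => //; apply: orth_sym.
have mAB : (val p :&: val q :=: A)%MS.
  apply/eqmxP/andP; split; last by rewrite sub_capmx ep eq !addsmxSl.
  apply/rV_subP => v; rewrite sub_capmx ep eq => /andP[].
  case/sub_addsmxP=> [[a1 b1] /= ev] vAD.
  have hb : (b1 *m B <= A + D)%MS.
    have -> : b1 *m B = v - a1 *m A by rewrite ev addrAC subrr add0r.
    rewrite addmx_sub // subN; apply: submx_trans (addsmxSl _ _).
    exact: mulmx_sub (submx_refl _).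
  have b0 : b1 *m B = 0.
    apply: (orth_self hb); apply: (orth_sub _ (submx_refl _) oB).
    exact: mulmx_sub (submx_refl _).
  by rewrite ev b0 addr0; exact: mulmx_sub (submx_refl _).
have em : (val (smeet p q) :=: A)%MS := eqmx_trans (val_smeet p q) mAB.
split => //.
apply: subsp_ext; apply: eqmx_sym; apply: eqmx_trans (val_sjoin _ _) _.
apply: eqmx_trans (adds_eqmx em (val_smeet _ _)) _.
apply/eqmxP/andP; split.
  by rewrite addsmx_sub ep addsmxSl /= capmxSl.
rewrite ep addsmxS ?submx_refl //.
rewrite sub_capmx ep addsmxSr /= (val_sorth q) sub_Km; apply/eqP.
by apply: (orth_sub (submx_refl _) _ oB); rewrite eq.
Qed.


Lemma sas_mono (d : nat) (p p' q : subsp d) : sle p p' -> sle (sasaki p q) (sasaki p' q).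
Proof.
rewrite /sle => h; rewrite !val_sasaki; apply: capmxS => //.
by apply: addsmxS.
Qed.

Lemma sas_le (d : nat) (p q : subsp d) : sle (sasaki p q) q.
Proof. by rewrite /sle val_sasaki capmxSl. Qed.

Lemma sas_bot (d : nat) (k q : subsp d) : sle (sasaki k q) (sbot d) <-> sle k (sorth q).
Proof. by rewrite /sle val_sbot val_sasaki val_sorth; exact: sas0. Qed.

Lemma sas_pic' (d : nat) (k p q : subsp d) :
  sle p q -> sle (sasaki k q) (sorth p) -> sle k (sorth p).
Proof. by rewrite /sle val_sasaki !val_sorth; exact: sas_pic. Qed.

Lemma sas_top (d : nat) (q : subsp d) : sasaki (stop d) q = q.
Proof.
apply: sle_antisym; first exact: sas_le.
rewrite /sle val_sasaki sub_capmx submx_refl /=.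
apply: submx_trans (submx1 _) _; apply: submx_trans (addsmxSr _ _).
by rewrite val_stop.
Qed.

Lemma unitary_unit (d : nat) (U : unitary d) : val U \in unitmx.
Proof. by have [] := mulmx1_unit (eqP (valP U)). Qed.

Lemma uimg_mono (d : nat) (U : unitary d) (p q : subsp d) :
  sle p q -> sle (uimg U p) (uimg U q).
Proof. by rewrite /sle !genmxE => h; apply: submxMr. Qed.

Lemma uinvimg_mono (d : nat) (U : unitary d) (p q : subsp d) :
  sle p q -> sle (uinvimg U p) (uinvimg U q).
Proof. by rewrite /sle !genmxE => h; apply: submxMr. Qed.

Lemma uimgK (d : nat) (U : unitary d) (p : subsp d) : uimg U (uinvimg U p) = p.
Proof.
apply: subsp_ext; apply: eqmx_trans (genmxE _) _; apply: eqmx_trans (eqmxMr _ (genmxE _)) _.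
by rewrite -mulmxA -trmx_mul mulmxV ?unitary_unit // trmx1 mulmx1; exact: eqmx_refl.
Qed.

Lemma uinvimgK (d : nat) (U : unitary d) (p : subsp d) : uinvimg U (uimg U p) = p.
Proof.
apply: subsp_ext; apply: eqmx_trans (genmxE _) _; apply: eqmx_trans (eqmxMr _ (genmxE _)) _.
by rewrite -mulmxA -trmx_mul mulVmx ?unitary_unit // trmx1 mulmx1; exact: eqmx_refl.
Qed.

Lemma sle_top (d : nat) (p : subsp d) : sle p (stop d).
Proof. by rewrite /sle val_stop submx1. Qed.

Lemma sle_meet (d : nat) (k p q : subsp d) : sle k p -> sle k q -> sle k (smeet p q).
Proof. by rewrite /sle val_smeet sub_capmx => -> ->. Qed.

Lemma easy_dir (d : nat) (M : Lstruct d) (kappa : M -> subsp d) :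
  strong_morphism kappa ->
  ~ (forall y : subsp d, (exists m : M, kappa m = y) <-> y = sbot d) ->
  PQM_model M.
Proof.
move=> hk hne.
have R p x : rel M p x <-> sle (kappa x) p by case: (hk x) => h _; exact: h.
have Pi q x : kappa (pi_sym M q x) = sasaki (kappa x) q by case: (hk x) => _ [h _].
have Uu U x : kappa (u_sym M U x) = uimg U (kappa x) by case: (hk x) => _ [_ h].
split.
  apply: NNPP => hn; apply: hne => y; split.
    case=> m <-; apply/sle_bot; apply/R; apply: NNPP => h; apply: hn; by exists m.
  move=> ->; case: (dom_inhabited M) => m; exists m; apply/sle_bot; apply/R.
  apply: NNPP => h; apply: hn; by exists m.
split; first by move=> x; apply/R; exact: sle_top.
split; first by move=> p q hpq x /R h; apply/R; exact: sle_trans h hpq.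
split; first by move=> p q _ x [/R h1 /R h2]; apply/R; exact: sle_meet.
split; first by move=> p q x /R h; apply/R; rewrite Pi; exact: sas_mono.
split.
  move=> p q hpq x /R; rewrite !Pi => h; apply/R; rewrite Pi.
  apply/sas_bot; apply: sas_pic' hpq _; exact/sas_bot.
split; first by move=> q x /R; rewrite Pi => /sas_bot h; apply/R.
split; first by move=> p U x /R h; apply/R; rewrite Uu; exact: uimg_mono.
move=> p U x /R; rewrite Uu => h; apply/R.
by rewrite -(uinvimgK U (kappa x)); apply: uinvimg_mono.
Qed.


Definition RayLemma (d : nat) : Prop :=
  forall (F : subsp d -> Prop),
  (forall p q, sle p q -> F p -> F q) ->
  (forall p q, compatible p q -> F p -> F q -> F (smeet p q)) ->
  forall v w : 'rV[C]_d, v != 0 -> ~~ (v <= w)%MS ->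
  F (spanr v) -> F (spanr w) -> F (sbot d).

Lemma sorthK_le (d : nat) (r : subsp d) : sle (sorth (sorth r)) r.
Proof. by rewrite /sle (val_sorth (sorth r)) (Km_eqmx (val_sorth r)) KmK. Qed.

Lemma le_sorthK (d : nat) (r : subsp d) : sle r (sorth (sorth r)).
Proof. by rewrite /sle (val_sorth (sorth r)) (Km_eqmx (val_sorth r)) KmK. Qed.

Lemma sorth_anti (d : nat) (p q : subsp d) : sle p q -> sle (sorth q) (sorth p).
Proof. by rewrite /sle !val_sorth; exact: Km_anti. Qed.

Lemma compat_split (d : nat) (s q : subsp d) : sle s q ->
  compatible q (sjoin s (sorth q)) /\ smeet q (sjoin s (sorth q)) = s.
Proof.
move=> hsq.
have o1 : val s *m adjmx (val q :&: Km (val s))%MS = 0.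
  apply: orth_sym; apply/eqP; rewrite -sub_Km; exact: capmxSr.
have o2 : val s *m adjmx (Km (val q)) = 0.
  apply: orth_sym; apply: (orth_sub (submx_refl _) hsq); exact: Km_orth.
have o3 : (val q :&: Km (val s))%MS *m adjmx (Km (val q)) = 0.
  apply: orth_sym; apply: (orth_sub (submx_refl _) (capmxSl _ _)); exact: Km_orth.
have e1 : (val q :=: val s + (val q :&: Km (val s)))%MS.
  apply/eqmxP/andP; split; first exact: split_sub.
  by rewrite addsmx_sub hsq capmxSl.
have e2 : (val (sjoin s (sorth q)) :=: val s + Km (val q))%MS.
  apply: eqmx_trans (val_sjoin _ _) _; apply: adds_eqmx => //; exact: val_sorth.
have [c e] := compat_lemma o1 o2 o3 e1 e2.
by split => //; apply: subsp_ext.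
Qed.

Lemma sub_mod2 (d m n k : nat) (B : 'M[C]_(m, d)) (A : 'M[C]_(n, d)) (X : 'M[C]_(k, d)) :
  (B <= A)%MS -> (X <= A)%MS -> (X <= B + Km A)%MS -> (X <= B)%MS.
Proof.
move=> sBA sXA /sub_addsmxP[[s t] /= ex].
have h : (t *m Km A <= A :&: Km A)%MS.
  rewrite sub_capmx [X in _ && X]mulmx_sub ?submx_refl // andbT.
  have -> : t *m Km A = X - s *m B by rewrite ex addrAC subrr add0r.
  by rewrite addmx_sub // subN mulmx_sub.
move: h; rewrite cap_Km0 submx0 => /eqP h.
by rewrite ex h addr0 mulmx_sub ?submx_refl.
Qed.


Lemma hard_dir (d : nat) (M : Lstruct d) (RL : RayLemma d) :
  PQM_model M ->
  exists kappa : M -> subsp d,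
    strong_morphism kappa /\
    ~ (forall y : subsp d, (exists m : M, kappa m = y) <-> y = sbot d).
Proof.
case=> [Hnb [Htop [Hle [Hmeet [Hpii [Hpic [Hpib [Hui Hue]]]]]]]].
have PA p r x : sle (sorth p) r -> rel M r (pi_sym M p x) -> rel M r x.
  move=> hpr h.
  have h1 := Hpii _ (sorth r) _ h.
  have h2 : rel M (sbot d) (pi_sym M (sorth r) (pi_sym M p x)).
    apply: Hle h1; apply/sas_bot; exact: le_sorthK.
  have h3 : sle (sorth r) p.
    apply: sle_trans (sorthK_le p); exact: sorth_anti.
  have h4 := Hpib _ _ (Hpic _ _ h3 _ h2).
  by apply: Hle h4; exact: sorthK_le.
have R1 w q x : rel M w x -> rel M q x -> rel M (sasaki w q) x.
  move=> hw hq.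
  have h1 := Hpii _ q _ hw.
  have h2 : rel M (sjoin (sasaki w q) (sorth q)) (pi_sym M q x).
    by apply: Hle h1; rewrite /sle val_sjoin addsmxSl.
  have h3 : rel M (sjoin (sasaki w q) (sorth q)) x.
    by apply: PA h2; rewrite /sle val_sjoin addsmxSr.
  have [hc <-] := compat_split (sas_le w q).
  exact: (Hmeet _ _ hc x (conj hq h3)).
have minex x : exists a, rel M a x /\ forall b, rel M b x -> (\rank (val a) <= \rank (val b))%N.
  suff H : forall n p, rel M p x -> (\rank (val p) <= n)%N ->
      exists a, rel M a x /\ forall b, rel M b x -> (\rank (val a) <= \rank (val b))%N.
    by apply: (H d (stop d)); [exact: Htop | exact: rank_leq_col].
  elim=> [|n IH] p hp hr.
    by exists p; split => // b _; move: hr; rewrite leqn0 => /eqP ->.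
  case: (classic (exists b, rel M b x /\ (\rank (val b) < \rank (val p))%N)) => [[b [hb hlt]]|hn].
    by apply: (IH b hb); lia.
  exists p; split => // b hb; rewrite leqNgt; apply/negP => hlt; apply: hn; by exists b.
have red x a c : rel M a x -> rel M c x ->
    (forall b, rel M b x -> (\rank (val a) <= \rank (val b))%N) ->
    \rank (val c) = \rank (val a) -> ~ sle a c -> False.
  move=> ha hc hmin rc hnot.
  set A := val a; set Cc := val c.
  set S := (A :&: Cc)%MS; set W := (A :&: Km S)%MS.
  have W0 : W != 0.
    apply/negP => /eqP W0; apply: hnot; rewrite /sle.
    have := split_sub (capmxSl A Cc); rewrite -/S -/W W0 addsmx0 => h.
    exact: submx_trans h (capmxSr _ _).
  set v := nz_row W.
  have hv0 : v != 0 by rewrite nz_row_eq0.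
  have hvW : (v <= W)%MS by exact: nz_row_sub.
  have hvA : (v <= A)%MS by exact: submx_trans hvW (capmxSl _ _).
  have hvS : v *m adjmx S = 0.
    by apply/eqP; rewrite -sub_Km; exact: submx_trans hvW (capmxSr _ _).
  set q := sjoin (spanr v) (sorth a).
  have eQ : (val q :=: v + Km A)%MS :=
    eqmx_trans (val_sjoin _ _) (adds_eqmx (val_spanr v) (val_sorth a)).
  have KQA : (Km (val q) <= A)%MS.
    have h : (Km A <= val q)%MS by rewrite eQ addsmxSr.
    by have := Km_anti h; rewrite KmK.
  have vQ : (v <= val q)%MS by rewrite eQ addsmxSl.
  have rk : (\rank (val (sorth q)) < \rank A)%N.
    rewrite ltnNge; apply/negP => hr.
    have sKA : (val (sorth q) <= A)%MS by rewrite val_sorth.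
    have h := sub_rank_eq sKA hr.
    have h2 : (v <= Km (val q))%MS by rewrite -(val_sorth q); exact: submx_trans hvA h.
    move: h2; rewrite sub_Km => /eqP h2.
    by move/negP: hv0; apply; apply/eqP; apply: (orth_self vQ).
  have nq : ~ rel M (sorth q) x.
    by move=> h; have := hmin _ h; rewrite leqNgt rk.
  set y := pi_sym M q x.
  have hy1 : rel M (spanr v) y.
    apply: Hle (Hpii _ q _ ha); rewrite /sle val_sasaki val_spanr.
    apply: (sub_mod2 hvA).
      by apply: submx_trans (capmxSr _ _) _; rewrite addsmx_sub KQA submx_refl.
    by apply: submx_trans (capmxSl _ _) _; rewrite eQ; exact: submx_refl.
  set Y := sasaki c q.
  have hY : rel M Y y by apply: Hpii.
  have nvY : ~~ (v <= val Y)%MS.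
    rewrite val_sasaki sub_capmx negb_and; apply/orP; right; apply/negP.
    case/sub_addsmxP=> [[s1 t1] /= ev].
    have wK : (s1 *m Km (val q) <= Km (val q))%MS by exact: mulmx_sub (submx_refl _).
    have zC : (t1 *m Cc <= Cc)%MS by exact: mulmx_sub (submx_refl _).
    have zA : (t1 *m Cc <= A)%MS.
      have -> : t1 *m Cc = v - s1 *m Km (val q) by rewrite ev addrAC subrr add0r.
      by rewrite addmx_sub // subN; exact: submx_trans wK KQA.
    have zS : (t1 *m Cc <= S)%MS by rewrite sub_capmx zA.
    have o1 : v *m adjmx (t1 *m Cc) = 0 by exact: (orth_sub (submx_refl _) zS hvS).
    have o2 : v *m adjmx (s1 *m Km (val q)) = 0.
      apply: (orth_sub vQ (submx_refl _)); apply: orth_sym.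
      apply: (orth_sub wK (submx_refl _)); exact: Km_orth.
    have : v *m adjmx v = 0 by rewrite {2}ev adjmxD mulmxDr o1 o2 addr0.
    by move/mul_adj_eq0 => h; move: hv0; rewrite h eqxx.
  set r2 := sasaki (spanr v) Y.
  have hr2 : rel M r2 y by apply: R1.
  have r2Y : sle r2 Y by exact: sas_le.
  have rk2 : (\rank (val r2) <= 1)%N.
    rewrite /r2 (val_sasaki (spanr v) Y); apply: leq_trans (sas_rank _ _) _.
    by rewrite (val_spanr v) rank_rV; case: (v != 0).
  have hbot : rel M (sbot d) y.
    case: (eqVneq (val r2) 0) => [r20 | r2n0].
      by apply: Hle hr2; rewrite /sle r20 sub0mx.
    set u := nz_row (val r2).
    have hu : (u <= val r2)%MS by exact: nz_row_sub.
    have hu0 : u != 0 by rewrite nz_row_eq0.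
    have e : (val r2 <= u)%MS.
      by apply: sub_rank_eq hu _; rewrite rank_rV hu0.
    apply: (RL (fun p => rel M p y)) hv0 _ hy1 _.
    - by move=> p1 p2 h hp; exact: Hle h y hp.
    - by move=> p1 p2 hc1 h1 h2; exact: Hmeet hc1 y (conj h1 h2).
    - apply/negP => vu; move/negP: nvY; apply.
      exact: submx_trans (submx_trans vu hu) r2Y.
    apply: (Hle r2 (spanr u) _ y hr2).
    by rewrite /sle val_spanr.
  by apply: nq; apply: Hpib.
have princ x : exists a, forall p, rel M p x <-> sle a p.
  have [a [ha hmin]] := minex x; exists a => p; split; last by move=> h; exact: Hle h x ha.
  move=> hp; have hc := R1 a p x ha hp.
  have rc : \rank (val (sasaki a p)) = \rank (val a).
    apply/eqP; rewrite eqn_leq hmin // andbT (val_sasaki a p); exact: sas_rank.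
  case: (classic (sle a (sasaki a p))) => [h | h].
    by apply: sle_trans h (sas_le a p).
  by exfalso; exact: red x a _ ha hc hmin rc h.
pose kappa x := proj1_sig (constructive_indefinite_description _ (princ x)).
have hk x p : rel M p x <-> sle (kappa x) p.
  exact: (proj2_sig (constructive_indefinite_description _ (princ x)) p).
have hself x : rel M (kappa x) x by apply/hk; exact: submx_refl.
exists kappa; split.
  move=> x; split; first exact: hk.
  split.
    move=> q; apply: sle_antisym.
      by apply/(hk (pi_sym M q x)); exact: (Hpii _ _ _ (hself x)).
    have hb := hself (pi_sym M q x).
    have bq : sle (kappa (pi_sym M q x)) q.
      by apply/hk; have := Hpii _ q _ (Htop x); rewrite sas_top.
    have h1 : rel M (sjoin (kappa (pi_sym M q x)) (sorth q)) x.
      apply: (PA q); first by rewrite /sle val_sjoin addsmxSr.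
      by apply: Hle hb; rewrite /sle val_sjoin addsmxSl.
    move/hk: h1 => /sas_mono h2; apply: sle_trans (h2 q) _.
    rewrite /sle !val_sasaki; apply: submx_trans (sas_mod bq).
    apply: capmxS => //; rewrite addsmx_sub addsmxSl andTb.
    rewrite (val_sjoin _ _) addsmx_sub addsmxSr andTb (val_sorth q).
    exact: addsmxSl.
  move=> U; apply: sle_antisym.
    by apply/(hk (u_sym M U x)); exact: (Hui _ _ _ (hself x)).
  have := Hue _ _ _ (hself (u_sym M U x)) => /hk /(uimg_mono U).
  by rewrite uimgK.
case: Hnb => x hx H; apply: hx; apply/hk.
have [_ h] := H (kappa x); rewrite (proj1 (H (kappa x)) (ex_intro _ x erefl)).
exact: submx_refl.
Qed.


Notation RR := Rdefinitions.R.
Definition rc (x : RR) : C := real_complex RR x.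

Lemma rcD (x y : RR) : rc (x + y) = rc x + rc y. Proof. by rewrite /rc rmorphD. Qed.
Lemma rcM (x y : RR) : rc (x * y) = rc x * rc y. Proof. by rewrite /rc rmorphM. Qed.
Lemma rcN (x : RR) : rc (- x) = - rc x. Proof. by rewrite /rc rmorphN. Qed.
Lemma rc0 : rc 0 = 0. Proof. by rewrite /rc rmorph0. Qed.
Lemma rc1 : rc 1 = 1. Proof. by rewrite /rc rmorph1. Qed.
Lemma rcJ (x : RR) : (rc x)^* = rc x. Proof. exact: conjc_real. Qed.
Lemma rc_inj (x y : RR) : rc x = rc y -> x = y. Proof. by move/complexI. Qed.

Definition ip (d : nat) (u v : 'rV[C]_d) : C := (u *m adjmx v) 0 0.

Lemma ip_mx (d : nat) (u v : 'rV[C]_d) : u *m adjmx v = (ip u v)%:M.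
Proof. by rewrite /ip {1}[u *m adjmx v]mx11_scalar. Qed.

Lemma ip_eq0 (d : nat) (u v : 'rV[C]_d) : (u *m adjmx v = 0) <-> (ip u v = 0).
Proof.
rewrite ip_mx; split; first by move/(congr1 (fun M : 'M[C]_1 => M 0 0)); rewrite !mxE.
by move=> ->; apply/matrixP => i j; rewrite !mxE mul0rn.
Qed.

Lemma ipDl (d : nat) (u u' v : 'rV[C]_d) : ip (u + u') v = ip u v + ip u' v.
Proof. by rewrite /ip mulmxDl mxE. Qed.
Lemma ipDr (d : nat) (u v v' : 'rV[C]_d) : ip u (v + v') = ip u v + ip u v'.
Proof. by rewrite /ip adjmxD mulmxDr mxE. Qed.
Lemma ipZl (d : nat) (a : C) (u v : 'rV[C]_d) : ip (a *: u) v = a * ip u v.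
Proof. by rewrite /ip -scalemxAl mxE. Qed.
Lemma ipZr (d : nat) (a : C) (u v : 'rV[C]_d) : ip u (a *: v) = a^* * ip u v.
Proof. by rewrite /ip adjmxZ -scalemxAr mxE. Qed.
Lemma ipNl (d : nat) (u v : 'rV[C]_d) : ip (- u) v = - ip u v.
Proof. by rewrite -scaleN1r ipZl mulN1r. Qed.
Lemma ipNr (d : nat) (u v : 'rV[C]_d) : ip u (- v) = - ip u v.
Proof. by rewrite -scaleN1r ipZr rmorphN1 mulN1r. Qed.
Lemma ipC (d : nat) (u v : 'rV[C]_d) : ip v u = (ip u v)^*.
Proof.
rewrite /ip; have -> : v *m adjmx u = adjmx (u *m adjmx v) by rewrite adjmxM adjmxK.
by rewrite {1}/adjmx !mxE.
Qed.
Lemma ip_self0 (d : nat) (u : 'rV[C]_d) : ip u u = 0 -> u = 0.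
Proof. by move/ip_eq0; exact: mul_adj_eq0. Qed.
Lemma ip_self_ge0 (d : nat) (u : 'rV[C]_d) : 0 <= ip u u.
Proof.
rewrite /ip mxE; apply: sumr_ge0 => i _; rewrite !mxE; exact: mul_conjC_ge0.
Qed.
Lemma ip_self_real (d : nat) (u : 'rV[C]_d) : exists r : RR, ip u u = rc r /\ 0 <= r.
Proof.
have h := ip_self_ge0 u.
have /complex_realP [r hr] : ip u u \is Num.real by exact: ger0_real.
exists r; split => //; by rewrite -ler0c -hr.
Qed.

Definition ON3 (d : nat) (x u e : 'rV[C]_d) :=
  ip x x = 1 /\ ip u u = 1 /\ ip e e = 1 /\ ip x u = 0 /\ ip x e = 0 /\ ip u e = 0.

Definition vec (d : nat) (x u e : 'rV[C]_d) (a b g : RR) : 'rV[C]_d :=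
  rc a *: x + rc b *: u + rc g *: e.

Lemma ip_vec (d : nat) (x u e : 'rV[C]_d) a b g a' b' g' :
  ON3 x u e -> ip (vec x u e a b g) (vec x u e a' b' g') = rc (a * a' + b * b' + g * g').
Proof.
case=> hx [hu [he [hxu [hxe hue]]]].
have hux : ip u x = 0 by rewrite ipC hxu conjC0.
have hex : ip e x = 0 by rewrite ipC hxe conjC0.
have heu : ip e u = 0 by rewrite ipC hue conjC0.
rewrite /vec !ipDl !ipDr !ipZl !ipZr !rcJ hx hu he hxu hxe hue hux hex heu.
by rewrite !rcD !rcM; ring.
Qed.

Lemma vec_lin (d : nat) (x u e : 'rV[C]_d) k k' a b g a' b' g' :
  rc k *: vec x u e a b g + rc k' *: vec x u e a' b' g' =
  vec x u e (k * a + k' * a') (k * b + k' * b') (k * g + k' * g').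
Proof.
rewrite /vec !scalerDr !scalerA -!rcM !rcD !scalerDl.
by rewrite addrACA [X in X + _]addrACA.
Qed.

Lemma vec100 (d : nat) (x u e : 'rV[C]_d) : vec x u e 1 0 0 = x.
Proof. by rewrite /vec rc1 rc0 !scale0r !addr0 scale1r. Qed.

Lemma eqmx_scale_rc (d : nat) (r : RR) (v : 'rV[C]_d) : r != 0 -> (rc r *: v :=: v)%MS.
Proof.
move=> hr; apply: eqmx_scale; apply/eqP => h; move/eqP: hr; apply; apply: rc_inj.
by rewrite h rc0.
Qed.

Lemma orth_pair_bot (d : nat) (F : subsp d -> Prop)
  (Fup : forall p q, sle p q -> F p -> F q)
  (Fmeet : forall p q, compatible p q -> F p -> F q -> F (smeet p q))
  (x y : 'rV[C]_d) : ip x y = 0 -> F (spanr x) -> F (spanr y) -> F (sbot d).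
Proof.
move=> hxy hx hy.
have o1 : (0 : 'rV[C]_d) *m adjmx x = 0 by rewrite mul0mx.
have o2 : (0 : 'rV[C]_d) *m adjmx y = 0 by rewrite mul0mx.
have o3 : x *m adjmx y = 0 by apply/ip_eq0.
have e1 : (val (spanr x) :=: (0 : 'rV[C]_d) + x)%MS.
  by apply: eqmx_trans (val_spanr x) _; apply: eqmx_sym; exact: adds0mx.
have e2 : (val (spanr y) :=: (0 : 'rV[C]_d) + y)%MS.
  by apply: eqmx_trans (val_spanr y) _; apply: eqmx_sym; exact: adds0mx.
have [hc hm] := compat_lemma o1 o2 o3 e1 e2.
have -> : sbot d = smeet (spanr x) (spanr y).
  apply: subsp_ext; rewrite val_sbot; apply: eqmx_sym; apply: eqmx_trans hm _.
  by apply/eqmxP; rewrite !sub0mx.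
exact: Fmeet hc hx hy.
Qed.

Lemma gen_ray (d : nat) (F : subsp d -> Prop)
  (Fup : forall p q, sle p q -> F p -> F q)
  (Fmeet : forall p q, compatible p q -> F p -> F q -> F (smeet p q))
  (l nB nD X Y : 'rV[C]_d) :
  ip l nB = 0 -> ip l nD = 0 -> ip nB nD = 0 ->
  (X <= l + nB)%MS -> (Y <= l + nD)%MS -> F (spanr X) -> F (spanr Y) -> F (spanr l).
Proof.
move=> o1 o2 o3 hX hY FX FY.
have e1 := val_spanr (l + nB)%MS.
have e2 := val_spanr (l + nD)%MS.
have [hc hm] := compat_lemma (proj2 (ip_eq0 _ _) o1) (proj2 (ip_eq0 _ _) o2)
   (proj2 (ip_eq0 _ _) o3) e1 e2.
have h1 : F (spanr (l + nB)%MS) by apply: (Fup _ _ _ FX); rewrite /sle !val_spanr.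
have h2 : F (spanr (l + nD)%MS) by apply: (Fup _ _ _ FY); rewrite /sle !val_spanr.
apply: (Fup _ _ _ (Fmeet _ _ hc h1 h2)).
by rewrite /sle hm val_spanr.
Qed.

Lemma vec_scale (d : nat) (x u e : 'rV[C]_d) k a b g :
  rc k *: vec x u e a b g = vec x u e (k * a) (k * b) (k * g).
Proof. by rewrite /vec !scalerDr !scalerA -!rcM. Qed.

Lemma gen_param (d : nat) (F : subsp d -> Prop)
  (Fup : forall p q, sle p q -> F p -> F q)
  (Fmeet : forall p q, compatible p q -> F p -> F q -> F (smeet p q))
  (x u e : 'rV[C]_d) (ON : ON3 x u e) (c s a b g : RR) :
  a^+2 + b^+2 + g^+2 = 1 -> c * (1 - a^+2) = s * a * b -> g != 0 -> s != 0 ->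
  F (spanr x) -> F (spanr (vec x u e c s 0)) -> F (spanr (vec x u e a b g)).
Proof.
move=> H1 H2 hg hs Fx Fy.
set l := vec x u e a b g.
set nB := vec x u e (s * g) (- (c * g)) (c * b - s * a).
set nD := vec x u e 0 (- g) b.
have o1 : ip l nB = 0 by rewrite ip_vec // -rc0; congr rc; ring.
have o2 : ip l nD = 0 by rewrite ip_vec // -rc0; congr rc; ring.
have o3 : ip nB nD = 0.
  rewrite ip_vec // -rc0; congr rc.
  have -> : s * g * 0 + - (c * g) * - g + (c * b - s * a) * b =
     c * (a^+2 + b^+2 + g^+2 - 1) + (c * (1 - a^+2) - s * a * b) by ring.
  by rewrite H1 H2 !subrr mulr0 addr0.
apply: (gen_ray Fup Fmeet o1 o2 o3 (X := x) (Y := vec x u e c s 0)) => //.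
  have hsg : s * g != 0 by rewrite mulf_neq0.
  rewrite -(eqmx_scale_rc x hsg) -[in X in (X <= _)%MS](vec100 x u e) vec_scale.
  have -> : vec x u e (s * g * 1) (s * g * 0) (s * g * 0) =
      rc (a * s * g) *: l + rc (1 - a^+2) *: nB.
    rewrite /l /nB vec_lin.
    have E1 : s * g * 1 = a * s * g * a + (1 - a ^+ 2) * (s * g) by ring.
    have E2 : s * g * 0 = a * s * g * b + (1 - a ^+ 2) * - (c * g).
      have -> : a * s * g * b + (1 - a ^+ 2) * - (c * g) =
          s * g * 0 - g * (c * (1 - a^+2) - s * a * b) by ring.
      by rewrite H2 subrr; ring.
    have E3 : s * g * 0 = a * s * g * g + (1 - a ^+ 2) * (c * b - s * a).
      have -> : a * s * g * g + (1 - a ^+ 2) * (c * b - s * a) =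
          s * g * 0 + a * s * (a^+2 + b^+2 + g^+2 - 1) + b * (c * (1 - a^+2) - s * a * b) by ring.
      by rewrite H1 H2 !subrr; ring.
    by rewrite -E1 -E2 -E3.
  by apply: addmx_sub_adds; apply: scalemx_sub.
rewrite -(eqmx_scale_rc _ hg) vec_scale.
have -> : vec x u e (g * c) (g * s) (g * 0) =
    rc ((c * a + s * b) * g) *: l + rc ((c * a + s * b) * b - s) *: nD.
  rewrite /l /nD vec_lin.
  have E1 : g * c = (c * a + s * b) * g * a + ((c * a + s * b) * b - s) * 0.
    have -> : (c * a + s * b) * g * a + ((c * a + s * b) * b - s) * 0 =
        g * c - g * (c * (1 - a^+2) - s * a * b) by ring.
    by rewrite H2 subrr; ring.
  have E2 : g * s = (c * a + s * b) * g * b + ((c * a + s * b) * b - s) * - g by ring.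
  have E3 : g * 0 = (c * a + s * b) * g * g + ((c * a + s * b) * b - s) * b.
    have -> : (c * a + s * b) * g * g + ((c * a + s * b) * b - s) * b =
        g * 0 + (c * a + s * b) * (a^+2 + b^+2 + g^+2 - 1) + a * (c * (1 - a^+2) - s * a * b) by ring.
    by rewrite H1 H2 !subrr; ring.
  by rewrite -E1 -E2 -E3.
by apply: addmx_sub_adds; apply: scalemx_sub.
Qed.


Lemma ipZZ (d : nat) (k : RR) (u v : 'rV[C]_d) :
  ip (rc k *: u) (rc k *: v) = rc (k * k) * ip u v.
Proof. by rewrite ipZl ipZr rcJ rcM mulrA. Qed.

Lemma normalize (d : nat) (v : 'rV[C]_d) : v != 0 ->
  exists k : RR, k != 0 /\ ip (rc k *: v) (rc k *: v) = 1.
Proof.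
move=> hv; have [r [hr r0]] := ip_self_real v.
have rpos : 0 < r.
  rewrite lt0r r0 andbT; apply/eqP => h; move/eqP: hv; apply; apply: ip_self0.
  by rewrite hr h rc0.
have sq := sqr_sqrtr r0.
have spos : 0 < Num.sqrt r by rewrite sqrtr_gt0.
exists (Num.sqrt r)^-1; split; first by rewrite invr_eq0 lt0r_neq0.
rewrite ipZZ hr -rcM -rc1; congr rc.
rewrite -{3}sq; field; exact: lt0r_neq0.
Qed.

Definition Pair (d : nat) (x y : 'rV[C]_d) (c : RR) :=
  ip x x = 1 /\ ip y y = 1 /\ ip x y = rc c.

Lemma frame (d : nat) (Hd : (3 <= d)%N) (x y : 'rV[C]_d) (c : RR) :
  Pair x y c -> 0 <= c -> c < 1 ->
  exists u e, ON3 x u e /\ y = vec x u e c (Num.sqrt (1 - c^+2)) 0.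
Proof.
case=> hx [hy hxy] c0 c1.
set s := Num.sqrt (1 - c^+2).
have h1c : 0 < 1 - c^+2 by nra.
have hs2 : s^+2 = 1 - c^+2 by rewrite sqr_sqrtr // ltW.
have spos : 0 < s by rewrite sqrtr_gt0.
have hyx : ip y x = rc c by rewrite ipC hxy rcJ.
set u := rc s^-1 *: (y - rc c *: x).
have hxu : ip x u = 0.
  by rewrite /u ipZr ipDr ipNr ipZr !rcJ hxy hx mulr1 subrr mulr0.
have huu : ip u u = 1.
  rewrite /u ipZZ !ipDl !ipDr !ipNl !ipNr !ipZl !ipZr rcJ hx hy hxy hyx.
  rewrite -rc1 -!rcM -!rcN -!rcD -rcM; congr rc.
  rewrite mulr1 -(expr2 c) -hs2; field; exact: lt0r_neq0.
set K := Km (col_mx x y).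
have rK : (0 < \rank K)%N.
  rewrite rank_Km; have := rank_leq_row (col_mx x y); lia.
set e0 := nz_row K.
have he0 : e0 != 0 by rewrite nz_row_eq0 -mxrank_eq0 -lt0n.
have oe0 : e0 *m adjmx (col_mx x y) = 0 by apply/eqP; rewrite -sub_Km nz_row_sub.
move: oe0; rewrite adjmx_col mul_mx_row => /eqP; rewrite row_mx_eq0 => /andP[/eqP o1 /eqP o2].
have ie0x : ip x e0 = 0 by rewrite ipC; move/ip_eq0: o1 => ->; rewrite conjC0.
have ie0y : ip y e0 = 0 by rewrite ipC; move/ip_eq0: o2 => ->; rewrite conjC0.
have [k [k0 hk]] := normalize he0.
set e := rc k *: e0.
exists u, e; split.
  split => //; split => //; split => //; split => //; split.
    by rewrite /e ipZr ie0x mulr0.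
  by rewrite /u /e ipZl ipZr ipDl ipNl ipZl ie0x ie0y mulr0 subrr !mulr0.
rewrite /vec rc0 scale0r addr0 /u scalerA -rcM divff ?lt0r_neq0 // rc1 scale1r.
by rewrite addrC subrK.
Qed.

Lemma step_lemma (d : nat) (Hd : (3 <= d)%N) (F : subsp d -> Prop)
  (Fup : forall p q, sle p q -> F p -> F q)
  (Fmeet : forall p q, compatible p q -> F p -> F q -> F (smeet p q))
  (x y : 'rV[C]_d) (c : RR) :
  Pair x y c -> 1/3 < c -> c < 1 -> F (spanr x) -> F (spanr y) ->
  exists x' y', Pair x' y' ((3 * c - 1) / (1 + c)) /\ F (spanr x') /\ F (spanr y').
Proof.
move=> hp c13 c1 Fx Fy.
have c0 : 0 <= c by lra.
have [u [e [ON ey]]] := frame Hd hp c0 c1.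
set s := Num.sqrt (1 - c^+2) in ey.
have h1c : 0 < 1 - c^+2 by nra.
have hs2 : s^+2 = 1 - c^+2 by rewrite sqr_sqrtr // ltW.
have spos : 0 < s by rewrite sqrtr_gt0.
have c1p : 0 < 1 + c by lra.
set a := Num.sqrt c.
set b := s * a / (1 + c).
set g := Num.sqrt ((1 - c) / (1 + c)).
have ha2 : a^+2 = c by rewrite sqr_sqrtr.
have hgp : 0 < (1 - c) / (1 + c) by apply: divr_gt0; lra.
have hg2 : g^+2 = (1 - c) / (1 + c) by rewrite sqr_sqrtr // ltW.
have gpos : 0 < g by rewrite sqrtr_gt0.
have H1 : a^+2 + b^+2 + g^+2 = 1.
  rewrite /b expr_div_n !exprMn hs2 ha2 hg2; field; exact: lt0r_neq0.
have H1' : a^+2 + b^+2 + (- g)^+2 = 1 by rewrite sqrrN.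
have H2 : c * (1 - a^+2) = s * a * b.
  have -> : s * a * b = s^+2 * a^+2 / (1 + c) by rewrite /b; field; exact: lt0r_neq0.
  rewrite hs2 ha2; field; exact: lt0r_neq0.
have Fy' : F (spanr (vec x u e c s 0)) by rewrite -ey.
exists (vec x u e a b g), (vec x u e a b (- g)); split.
  split; first by rewrite ip_vec // -!expr2 H1 rc1.
  split; first by rewrite ip_vec // -!expr2 H1' rc1.
  rewrite ip_vec //; congr rc.
  have -> : a * a + b * b + g * - g = a^+2 + b^+2 - g^+2 by ring.
  rewrite /b expr_div_n !exprMn hs2 ha2 hg2; field; exact: lt0r_neq0.
split.
  apply: (gen_param Fup Fmeet ON H1 H2) => //; [exact: lt0r_neq0 | exact: lt0r_neq0].
apply: (gen_param Fup Fmeet ON H1' H2) => //.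
  by rewrite oppr_eq0; exact: lt0r_neq0.
exact: lt0r_neq0.
Qed.

Lemma final_lemma (d : nat) (Hd : (3 <= d)%N) (F : subsp d -> Prop)
  (Fup : forall p q, sle p q -> F p -> F q)
  (Fmeet : forall p q, compatible p q -> F p -> F q -> F (smeet p q))
  (x y : 'rV[C]_d) (c : RR) :
  Pair x y c -> 0 <= c -> c <= 1/3 -> F (spanr x) -> F (spanr y) -> F (sbot d).
Proof.
move=> hp c0 c13 Fx Fy.
case: (eqVneq c 0) => [ec | cn0].
  by apply: (orth_pair_bot Fup Fmeet _ Fx Fy); case: hp => _ [_ ->]; rewrite ec rc0.
have cpos : 0 < c by rewrite lt0r cn0.
have c1 : c < 1 by lra.
have [u [e [ON ey]]] := frame Hd hp c0 c1.
set s := Num.sqrt (1 - c^+2) in ey.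
have h1c : 0 < 1 - c^+2 by nra.
have hs2 : s^+2 = 1 - c^+2 by rewrite sqr_sqrtr // ltW.
have spos : 0 < s by rewrite sqrtr_gt0.
set D := s^+2 - 8 * c^+2.
have D0 : 0 <= D by rewrite /D hs2; nra.
set sD := Num.sqrt D.
have hD2 : sD^+2 = D by rewrite sqr_sqrtr.
have sDs : sD <= s.
  have : sD <= Num.sqrt (s^+2) by rewrite ler_sqrt ?sqr_ge0 // /D; nra.
  by rewrite sqrtr_sqr ger0_norm // ltW.
set t := (s - sD) / (4 * c).
have t0 : 0 <= t by apply: divr_ge0; lra.
have hq : 2 * c * t^+2 - s * t + c = 0.
  have -> : 2 * c * t^+2 - s * t + c = (sD^+2 - (s^+2 - 8 * c^+2)) / (8 * c).
    by rewrite /t; field; exact: lt0r_neq0.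
  by rewrite hD2 /D subrr mul0r.
set cst := c + s * t.
have cstp : 0 < cst by rewrite /cst; nra.
set a := Num.sqrt (c / cst).
have ha2 : a^+2 = c / cst by rewrite sqr_sqrtr // divr_ge0 // ltW.
set b := t * a.
set g := Num.sqrt (1 / 2 : RR).
have hg2 : g^+2 = 1 / 2 by rewrite sqr_sqrtr //; lra.
have gpos : 0 < g by rewrite sqrtr_gt0; lra.
have hab : a^+2 + b^+2 = 1 / 2.
  rewrite /b exprMn ha2.
  have -> : c / cst + t ^+ 2 * (c / cst) = 1 / 2 + (2 * c * t^+2 - s * t + c) / (2 * cst).
    by rewrite /cst; field; rewrite -/cst; exact: lt0r_neq0.
  by rewrite hq mul0r addr0.
have H1 : a^+2 + b^+2 + g^+2 = 1 by rewrite hab hg2; lra.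
have H1' : a^+2 + b^+2 + (- g)^+2 = 1 by rewrite sqrrN.
have H2 : c * (1 - a^+2) = s * a * b.
  have -> : s * a * b = s * t * a^+2 by rewrite /b; ring.
  rewrite ha2 /cst; field; rewrite -/cst; exact: lt0r_neq0.
have Fy' : F (spanr (vec x u e c s 0)) by rewrite -ey.
have F1 : F (spanr (vec x u e a b g)).
  apply: (gen_param Fup Fmeet ON H1 H2) => //; exact: lt0r_neq0.
have F2 : F (spanr (vec x u e a b (- g))).
  apply: (gen_param Fup Fmeet ON H1' H2) => //; last exact: lt0r_neq0.
  by rewrite oppr_eq0; exact: lt0r_neq0.
apply: (orth_pair_bot Fup Fmeet _ F1 F2).
rewrite ip_vec // -rc0; congr rc.
have -> : a * a + b * b + g * - g = a^+2 + b^+2 - g^+2 by ring.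
by rewrite hab hg2 subrr.
Qed.

Lemma iter_lemma (d : nat) (Hd : (3 <= d)%N) (F : subsp d -> Prop)
  (Fup : forall p q, sle p q -> F p -> F q)
  (Fmeet : forall p q, compatible p q -> F p -> F q -> F (smeet p q))
  (c0 dl : RR) : 0 < dl -> c0 < 1 -> dl <= (1 - c0)^+2 / 2 ->
  forall n : nat, forall (x y : 'rV[C]_d) (c : RR), Pair x y c -> 0 <= c -> c <= c0 ->
  c <= n%:R * dl -> F (spanr x) -> F (spanr y) -> F (sbot d).
Proof.
move=> hdl hc0 hdl2; elim=> [|n IH] x y c hp cge0 cc0 cn Fx Fy.
  apply: (final_lemma Hd Fup Fmeet hp cge0 _ Fx Fy).
  by move: cn; rewrite mul0r => cn; lra.
case: (lerP c (1/3)) => [h | h].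
  exact: (final_lemma Hd Fup Fmeet hp cge0 h Fx Fy).
have c1 : c < 1 by lra.
have [x' [y' [hp' [Fx' Fy']]]] := step_lemma Hd Fup Fmeet hp h c1 Fx Fy.
have c1p : 0 < 1 + c by lra.
apply: (IH _ _ _ hp' _ _ _ Fx' Fy').
- by apply: divr_ge0; lra.
- rewrite ler_pdivrMr //; nra.
- rewrite ler_pdivrMr //.
  move: cn; rewrite -addn1 natrD mulrDl mul1r => cn.
  have hA : (1 - c0)^+2 <= (1 - c)^+2 by nra.
  have hB : dl * (1 + c) <= 2 * dl by nra.
  have hC : 3 * c - 1 <= (c - dl) * (1 + c) by nra.
  have hD : (c - dl) * (1 + c) <= n%:R * dl * (1 + c) by rewrite ler_pM2r //; lra.
  lra.
Qed.

Lemma ray_lemma (d : nat) (Hd : (3 <= d)%N) : RayLemma d.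
Proof.
move=> F Fup Fmeet v w hv hvw Fv Fw.
case: (eqVneq w 0) => [w0 | wn0].
  have -> : sbot d = spanr w by apply: val_inj; rewrite val_sbot /= w0 genmx0.
  exact: Fw.
have [k [k0 hk]] := normalize hv.
set x := rc k *: v.
have ex : (x :=: v)%MS := eqmx_scale_rc v k0.
have Fx : F (spanr x) by apply: Fup Fv; rewrite /sle !val_spanr ex.
have [k' [k0' hk']] := normalize wn0.
set y0 := rc k' *: w.
have ey0 : (y0 :=: w)%MS := eqmx_scale_rc w k0'.
have Fy0 : F (spanr y0) by apply: Fup Fw; rewrite /sle !val_spanr ey0.
set z := ip x y0.
case: (eqVneq z 0) => [z0 | zn0]; first exact: (orth_pair_bot Fup Fmeet z0 Fx Fy0).
have nz : `|z| != 0 by rewrite normr_eq0.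
set lam := z / `|z|.
have lam0 : lam != 0 by rewrite mulf_neq0 // invr_eq0.
set y := lam *: y0.
have ey : (y :=: y0)%MS := eqmx_scale y0 lam0.
have Fy : F (spanr y) by apply: Fup Fy0; rewrite /sle !val_spanr ey.
have [c hc] : exists c : RR, `|z| = rc c by apply/complex_realP; exact: normr_real.
have cge0 : 0 <= c.
  rewrite -ler0c; change (0 <= rc c); rewrite -hc; exact: normr_ge0.
have hxy : ip x y = rc c.
  have hl : lam^* = z^* / `|z|.
    rewrite /lam rmorphM fmorphV; congr (_ * _^-1); exact: (conj_Creal (normr_real z)).
  rewrite ipZr -/z hl -hc.
  by rewrite mulrAC [z^* * z]mulrC -normCK expr2 mulfK.
have hyy : ip y y = 1.
  rewrite ipZl ipZr hk' mulr1 -normCK normrM normfV normr_id divff //.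
  by rewrite expr1n.
have hp : Pair x y c by [].
have hyx : ip y x = rc c by rewrite ipC hxy rcJ.
have hxx : ip x x = 1 := hk.
clearbody x y.
set w' := y - rc c *: x.
have hw' : ip w' w' = rc (1 - c^+2).
  rewrite /w' !ipDl !ipDr !ipNl !ipNr !ipZl !ipZr !rcJ hyy hxy hyx hxx.
  rewrite -rc1 -!rcM -!rcN -!rcD; congr rc; ring.
have c1 : c < 1.
  rewrite lt_neqAle; apply/andP; split.
    apply/eqP => c1; move/negP: hvw; apply.
    have : w' = 0 by apply: ip_self0; rewrite hw' c1 expr1n subrr rc0.
    move/eqP; rewrite subr_eq0 c1 rc1 scale1r => /eqP eyx.
    by rewrite -ex -ey0 -ey eyx.
  have := ip_self_ge0 w'; rewrite hw'; change (0 <= real_complex RR (1 - c^+2) -> c <= 1).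
  rewrite ler0c => h; nra.
set dl := (1 - c)^+2 / 2.
have hdl : 0 < dl by apply: divr_gt0 => //; rewrite exprn_gt0 // subr_gt0.
have hcd : 0 <= c / dl by apply: divr_ge0 => //; exact: ltW.
have := archi_boundP hcd; set n := Num.Def.archi_bound _ => hn.
apply: (iter_lemma Hd Fup Fmeet hdl c1 _ (n := n) hp cge0 _ _ Fx Fy) => //.
by rewrite -ler_pdivrMr //; exact: ltW.
Qed.

Local Close Scope ring_scope.

Theorem mainTheorem15 (d : nat) (Hd : 3 <= d) (M : Lstruct d) :
  PQM_model M <->
  exists kappa : M -> subsp d,
    strong_morphism kappa /\
    (* kappa(M) <> {bot} *)
    ~ (forall y : subsp d, (exists m : M, kappa m = y) <-> y = sbot d).
Proof.
split; first exact: hard_dir (ray_lemma Hd).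
by case=> kappa [hk hne]; exact: easy_dir hk hne.
Qed.
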